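(* Let $X$ be a real Banach space and $D\subset X$ dense. Then $X$ has the Daugavet property if and only if for every $\varepsilon>0$ and $x,z\in D$, either $\|z\|\ge\|x\|$ or $$z\in\overline{\mathrm{co}}_{\mathbb{Q}}\big\{y\in \|x\|\operatorname{int}(B_X)\cap D: \|x-y\|>2\|x\|-\varepsilon\big\}.$$
   Context: $X$ has the Daugavet property if for every $\varepsilon>0$, $x\in S_X$ and slice $S=\{y\in B_X:f(y)>1-\alpha\}$ ($f\in S_{X^*}$, $\alpha>0$) there is $y\in S$ with $\|x-y\|>2-\varepsilon$. $\overline{\mathrm{co}}_{\mathbb{Q}}(A)$ is the norm closure of the set of convex combinations of elements of $A$ with rational coefficients; $\operatorname{int}(B_X)$ is the open unit ball. *)

(* Defs.v *)
From HB Require Import structures.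
From mathcomp Require Import all_boot all_order all_algebra.
From mathcomp Require Import all_classical all_reals all_analysis.
Set Implicit Arguments. Unset Strict Implicit. Unset Printing Implicit Defensive.
Import Order.TTheory GRing.Theory Num.Theory.
Import numFieldNormedType.Exports.
Local Open Scope classical_set_scope.
Local Open Scope ring_scope.

Definition closed_unit_ball {R : realType} (X : normedModType R) : set X :=
  [set u | `|u| <= 1].

Definition open_unit_ball {R : realType} (X : normedModType R) : set X :=
  [set u | `|u| < 1].

Definition dual_sphere {R : realType} (X : normedModType R) (f : X -> R) : Prop :=
  (forall (a : R) (u v : X), f (a *: u + v) = a * f u + f v) /\
  continuous f /\
  sup [set `|f u| | u in (@closed_unit_ball R X)] = 1.

(* Daugavet property (slice formulation) *)
Definition daugavet {R : realType} (X : normedModType R) : Prop :=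
  forall (eps : R), 0 < eps ->
  forall x : X, `|x| = 1 ->
  forall f : X -> R, dual_sphere f ->
  forall alpha : R, 0 < alpha ->
  exists y : X, [/\ (@closed_unit_ball R X) y, f y > 1 - alpha & `|x - y| > 2 - eps].

Definition rat_conv {R : realType} (X : normedModType R) (A : set X) : set X :=
  [set z | exists (n : nat) (lam : 'I_n -> rat) (a : 'I_n -> X),
     [/\ forall i, A (a i), forall i, 0 <= lam i,
         \sum_(i < n) lam i = 1 &
         z = \sum_(i < n) (ratr (lam i) : R) *: a i]].

Definition closed_rat_conv {R : realType} (X : normedModType R) (A : set X) : set X :=
  closure (rat_conv A).

Definition scale_set {R : realType} (X : normedModType R) (r : R) (A : set X) : set X :=
  [set r *: u | u in A].

(* Main.v *)
Require Import Defs.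
From HB Require Import structures.
From mathcomp Require Import all_boot all_order all_algebra.
From mathcomp Require Import all_classical all_reals all_analysis.
From mathcomp Require Import ring lra.
Import Order.TTheory GRing.Theory Num.Theory.
Import numFieldNormedType.Exports.
Local Open Scope classical_set_scope.
Local Open Scope ring_scope.
Section HB.
Variables (R : realType) (V : lmodType R) (p : V -> R).
Hypothesis psub : forall u v, p (u + v) <= p u + p v.
Hypothesis phom : forall s u, 0 < s -> p (s *: u) = s * p u.

Definition okG (G : set (V * R)) :=
  [/\ (forall s u v a b, G (u,a) -> G (v,b) -> G (s *: u + v, s * a + b)),
      (forall u a b, G (u,a) -> G (u,b) -> a = b) &
      (forall u a, G (u,a) -> a <= p u)].

Lemma p0 : p 0 = 0.
Proof.
have := @phom 2 0 (ltr0Sn R 1); rewrite scaler0 => h; lra.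
Qed.

Lemma hahn_banach : exists f : V -> R,
  (forall a u v, f (a *: u + v) = a * f u + f v) /\ forall v, f v <= p v.
Proof.
have [M [okM maxM]] : exists M, okG M /\ forall B, M `<` B -> ~ okG B.
  apply: Zorn_bigcup => F FP Ftot; split.
  - move=> s u v a b [G1 FG1 G1u] [G2 FG2 G2v].
    have [G12|G21] := Ftot _ _ FG1 FG2.
    + exists G2 => //; have [h _ _] := FP _ FG2; exact: h (G12 _ G1u) G2v.
    + exists G1 => //; have [h _ _] := FP _ FG1; exact: h G1u (G21 _ G2v).
  - move=> u a b [G1 FG1 G1u] [G2 FG2 G2v].
    have [G12|G21] := Ftot _ _ FG1 FG2.
    + have [_ h _] := FP _ FG2; exact: h (G12 _ G1u) G2v.
    + have [_ h _] := FP _ FG1; exact: h G1u (G21 _ G2v).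
  - move=> u a [G FG Gu]; have [_ _ h] := FP _ FG; exact: h Gu.
have [clM funM domM] := okM.
have M00 : M (0, 0).
  apply: contrapT => nM.
  have M0 : M = set0.
    apply/seteqP; split; last exact: sub0set.
    move=> [u a] Mua; exfalso; apply: nM.
    have := clM (-1) u u a a Mua Mua.
    by rewrite scaleN1r addNr mulN1r addNr.
  apply: (maxM [set (0:V, 0:R)]).
    by rewrite M0; split => //; move=> /(_ (0,0) erefl).
  split.
  - by move=> s u v a b [-> ->] [-> ->]; rewrite scaler0 addr0 mulr0 addr0.
  - by move=> u a b [_ ->] [_ ->].
  - by move=> u a [-> ->]; rewrite p0.
have totM : forall w, exists a, M (w, a).
  move=> w; apply: contrapT => /forallNP nw.
  pose E := [set pr.2 - p (pr.1 - w) | pr in M].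
  have E0 : E !=set0 by exists (0 - p (0 - w)); exists (0,0).
  have Eub : ubound E (p w).
    move=> _ [[u a] Mua <-] /=; rewrite lerBlDr.
    apply: (le_trans (domM _ _ Mua)).
    by rewrite addrC -[X in p X](subrK w u) psub.
  have hsE : has_sup E by split => //; exists (p w).
  pose c := sup E.
  have cge : forall u a, M (u,a) -> a - p (u - w) <= c.
    by move=> u a Mua; apply: sup_upper_bound => //; exists (u,a).
  have cle : forall u a, M (u,a) -> c <= p (u + w) - a.
    move=> u a Mua; apply: ge_sup => // _ [[u' a'] Mua' <-] /=.
    rewrite lerBrDr addrAC lerBlDr.
    have := domM _ _ (clM 1 _ _ _ _ Mua' Mua); rewrite scale1r mul1r => h.
    apply: (le_trans h).
    have -> : u' + u = (u' - w) + (u + w) by by rewrite addrACA addNr addr0.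
    by rewrite addrC psub.
  pose M' := [set pr | exists u a s, M (u,a) /\ pr = (u + s *: w, a + s * c)].
  have Mdom : forall u a v, M (u,a) -> v = u -> M (v, a) by move=> u a v ? ->.
  apply: (maxM M'); first split.
  - move=> [u a] Mua; exists u, a, 0; split => //.
    by rewrite scale0r addr0 mul0r addr0.
  - move=> /(_ (w, c)) h; apply: (nw c); apply: h.
    by exists 0, 0, 1; split => //; rewrite add0r scale1r add0r mul1r.
  split.
  - move=> s _ _ _ _ [u1 [a1 [s1 [M1 [-> ->]]]]] [u2 [a2 [s2 [M2 [-> ->]]]]].
    exists (s *: u1 + u2), (s * a1 + a2), (s * s1 + s2); split; first exact: clM.
    congr (_, _).
      by rewrite scalerDr scalerA addrACA -scalerDl.
    by rewrite mulrDr mulrA addrACA -mulrDl.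
  - move=> _ _ _ [u1 [a1 [s1 [M1 [-> ->]]]]] [u2 [a2 [s2 [M2 []]]]] e ->.
    have [es|nes] := eqVneq s1 s2.
      rewrite es in e *; have e' : u1 = u2 by apply: (addIr (s2 *: w)).
      by rewrite (funM u1 a1 a2 M1 (Mdom _ _ _ M2 e')).
    exfalso; apply: (nw ((s1 - s2)^-1 * (-1 * a1 + a2) + 0)).
    have := clM (s1 - s2)^-1 _ _ _ _ (clM (-1) _ _ _ _ M1 M2) M00.
    move=> h; apply: (Mdom _ _ _ h); rewrite addr0 scaleN1r.
    have -> : - u1 + u2 = (s1 - s2) *: w.
      have -> : u2 = u1 + s1 *: w - s2 *: w by rewrite e addrK.
      by rewrite scalerBl -addrA addKr.
    by rewrite scalerA mulVf ?scale1r // subr_eq0.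
  - move=> _ _ [u [a [s [Mua [-> ->]]]]].
    have [s0|s0|->] := ltgtP s 0; last first.
    + by rewrite scale0r mul0r !addr0; exact: domM.
    + have := cle _ _ (clM s^-1 _ _ _ _ Mua M00); rewrite !addr0 => h.
      have -> : u + s *: w = s *: (s^-1 *: u + w).
        by rewrite scalerDr scalerA mulfV ?gt_eqF // scale1r.
      rewrite phom //.
      have : s * c <= s * (p (s^-1 *: u + w) - s^-1 * a) by rewrite ler_pM2l.
      by rewrite mulrBr mulrA mulfV ?gt_eqF // mul1r; lra.
    + pose t := - s; have t0 : 0 < t by rewrite /t oppr_gt0.
      have := cge _ _ (clM t^-1 _ _ _ _ Mua M00); rewrite !addr0 => h.
      have -> : u + s *: w = t *: (t^-1 *: u - w).
        by rewrite scalerBr scalerA mulfV ?gt_eqF // scale1r /t scaleNr opprK.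
      rewrite phom //.
      have : t * (t^-1 * a - p (t^-1 *: u - w)) <= t * c by rewrite ler_pM2l.
      rewrite mulrBr mulrA mulfV ?gt_eqF // mul1r.
      have -> : s = - t by rewrite /t opprK.
      lra.
have [f Hf] := choice totM.
exists f; split; last by move=> v; exact: domM (Hf v).
move=> a u v; apply: (funM (a *: u + v)); first exact: Hf.
exact: clM.
Qed.
End HB.
Section Sep.
Variables (R : realType) (X : normedModType R) (Y : set X) (r : R).
Hypothesis r0 : 0 < r.
Definition goodS (s : seq (R * X)) := forall pr, pr \in s -> 0 <= pr.1 /\ Y pr.2.
Definition sumT (s : seq (R * X)) := \sum_(pr <- s) pr.1.
Definition sumV (s : seq (R * X)) := \sum_(pr <- s) pr.1 *: pr.2.
Hypothesis cone : forall s, goodS s -> sumT s * r <= `|sumV s|.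

Definition valS v s := `|v - sumV s| - sumT s * r.
Definition Ev v := [set valS v s | s in goodS].
Definition pS v := inf (Ev v).

Lemma valS_ge v s : goodS s -> - `|v| <= valS v s.
Proof.
move=> gs; rewrite /valS; have := cone _ gs.
have := lerB_dist (sumV s) v; rewrite distrC; lra.
Qed.

Lemma good_nil : goodS [::]. Proof. by []. Qed.

Lemma hasinf_Ev v : has_inf (Ev v).
Proof.
split; first by exists (valS v [::]), [::].
by exists (- `|v|) => _ [s gs <-]; exact: valS_ge.
Qed.

Lemma pS_le v {s} : goodS s -> pS v <= valS v s.
Proof. by move=> gs; apply: ge_inf; [exact: (hasinf_Ev v).2|exists s]. Qed.

Lemma pS_ge v : - `|v| <= pS v.
Proof.
apply: lb_le_inf; first by exists (valS v [::]), [::].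
by move=> _ [s gs <-]; exact: valS_ge.
Qed.

Lemma pS_norm v : pS v <= `|v|.
Proof.
have := pS_le v good_nil.
by rewrite /valS /sumV /sumT !big_nil subr0 mul0r subr0.
Qed.

Lemma pS_adh v e : 0 < e -> exists s, goodS s /\ valS v s < pS v + e.
Proof.
move=> e0; have [_ [s gs <-] h] := inf_adherent e0 (hasinf_Ev v).
by exists s.
Qed.

Lemma pS_sub u v : pS (u + v) <= pS u + pS v.
Proof.
apply/ler_addgt0Pr => e e0.
have e2 : 0 < e / 2 by rewrite divr_gt0.
have [s1 [g1 h1]] := @pS_adh u _ e2.
have [s2 [g2 h2]] := @pS_adh v _ e2.
have g12 : goodS (s1 ++ s2) by move=> pr; rewrite mem_cat => /orP[/g1|/g2].
apply: (le_trans (pS_le _ g12)).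
have : valS (u + v) (s1 ++ s2) <= valS u s1 + valS v s2.
  rewrite /valS /sumV /sumT !big_cat /=.
  have : `|u + v - (\sum_(pr <- s1) pr.1 *: pr.2 + \sum_(pr <- s2) pr.1 *: pr.2)|
     <= `|u - \sum_(pr <- s1) pr.1 *: pr.2| + `|v - \sum_(pr <- s2) pr.1 *: pr.2|.
    by rewrite opprD addrACA ler_normD.
  lra.
lra.
Qed.

Lemma pS_homle c v : 0 < c -> pS (c *: v) <= c * pS v.
Proof.
move=> c0; apply/ler_addgt0Pr => e e0.
have ec : 0 < e / c by rewrite divr_gt0.
have [s [gs hs]] := @pS_adh v _ ec.
pose s' := [seq (c * pr.1, pr.2) | pr <- s].
have gs' : goodS s'.
  move=> _ /mapP[pr prs ->] /=; have [h1 h2] := gs _ prs; split => //.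
  by rewrite mulr_ge0 // ltW.
apply: (le_trans (pS_le _ gs')).
have -> : valS (c *: v) s' = c * valS v s.
  rewrite /valS /sumV /sumT !big_map /= mulrBr mulrA -mulr_sumr; congr (_ - _).
  have -> : \sum_(j <- s) (c * j.1) *: j.2 = c *: \sum_(j <- s) j.1 *: j.2.
    by rewrite scaler_sumr; apply: eq_bigr => pr _; rewrite scalerA.
  by rewrite -scalerBr normrZ gtr0_norm.
have : c * valS v s <= c * (pS v + e / c) by rewrite ler_pM2l // ltW.
move=> h; apply: (le_trans h).
by rewrite mulrDr [c * (e / c)]mulrC divfK ?gt_eqF.
Qed.

Lemma pS_hom c v : 0 < c -> pS (c *: v) = c * pS v.
Proof.
move=> c0; apply/eqP; rewrite eq_le pS_homle //=.
have ci : 0 < c^-1 by rewrite invr_gt0.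
have := @pS_homle c^-1 (c *: v) ci; rewrite scalerA mulVf ?gt_eqF // scale1r => h.
have : c * pS v <= c * (c^-1 * pS (c *: v)) by rewrite ler_pM2l.
by rewrite mulrA mulfV ?gt_eqF // mul1r.
Qed.

Lemma sep_core : exists f : X -> R,
  [/\ (forall a u v, f (a *: u + v) = a * f u + f v),
      (forall v, `|f v| <= `|v|) &
      (forall y, Y y -> f y <= - r)].
Proof.
have [f [lf fp]] := @hahn_banach _ _ pS pS_sub pS_hom.
have f0 : f 0 = 0 by have := lf 1 0 0; rewrite scaler0 addr0 mul1r => h; lra.
have fN : forall v, f (- v) = - f v.
  by move=> v; have := lf (-1) v 0; rewrite f0 scaleN1r !addr0 mulN1r.
exists f; split => //.
- move=> v; rewrite ler_norml; apply/andP; split.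
    by have := fp (- v); have := pS_norm (- v); rewrite fN normrN; lra.
  exact: le_trans (fp v) (pS_norm v).
- move=> y Yy; apply: (le_trans (fp y)).
  have g1 : goodS [:: (1, y)].
    by move=> pr; rewrite inE => /eqP -> /=; split.
  apply: (le_trans (pS_le _ g1)).
  by rewrite /valS /sumV /sumT !big_seq1 /= scale1r subrr normr0 mul1r sub0r.
Qed.
End Sep.
Arguments goodS {R X}.
Arguments sumT {R X}.
Arguments sumV {R X}.
Section Norm.
Variables (R : realType) (X : normedModType R).
Implicit Types f : X -> R.

Definition linF (f : X -> R) := forall a u v, f (a *: u + v) = a * f u + f v.

Lemma linF0 {f} : linF f -> f 0 = 0.
Proof. by move=> lf; have := lf 1 0 0; rewrite scaler0 addr0 mul1r => h; lra. Qed.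

Lemma linFN {f} : linF f -> forall v, f (- v) = - f v.
Proof. by move=> lf v; have := lf (-1) v 0; rewrite (linF0 lf) scaleN1r !addr0 mulN1r. Qed.

Lemma linFZ {f} : linF f -> forall a v, f (a *: v) = a * f v.
Proof. by move=> lf a v; have := lf a v 0; rewrite (linF0 lf) !addr0. Qed.

Lemma linFB {f} : linF f -> forall u v, f (u - v) = f u - f v.
Proof. by move=> lf u v; have := lf 1 u (- v); rewrite scale1r mul1r linFN. Qed.

Lemma linFD {f} : linF f -> forall u v, f (u + v) = f u + f v.
Proof. by move=> lf u v; have := lf 1 u v; rewrite scale1r mul1r. Qed.

Lemma lin_cont f (k : R) : linF f -> 0 < k -> (forall v, `|f v| <= k * `|v|) -> continuous f.
Proof.
move=> lf k0 fb x; apply/cvgrPdist_lt => e e0.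
have ek : 0 < e / k by rewrite divr_gt0.
near=> t.
rewrite -(linFB lf); apply: (le_lt_trans (fb _)).
rewrite -ltr_pdivlMl // mulrC.
near: t.
by apply: (@cvgr_dist_lt _ _ _ (nbhs x) _ id x) => //; exact: cvg_id.
Unshelve. all: end_near.
Qed.

Lemma ds_lin {f} : dual_sphere f -> linF f.
Proof. by case. Qed.

Lemma ds_hassup {f} : dual_sphere f ->
  has_sup [set `|f u| | u in (@closed_unit_ball R X)].
Proof.
move=> [_ [_ s1]]; split; first by exists `|f 0|, 0 => //; rewrite /closed_unit_ball /= normr0.
apply: contrapT => nub.
have : sup [set `|f u| | u in (@closed_unit_ball R X)] = 0.
  by apply: sup_out => -[].
rewrite s1 => /eqP; rewrite oner_eq0.
by [].
Qed.

Lemma ds_bound f : dual_sphere f -> forall v, `|f v| <= `|v|.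
Proof.
move=> ds v; have lf := ds_lin ds.
have s1 : sup [set `|f u| | u in (@closed_unit_ball R X)] = 1 by case: ds => _ [].
have le1 : forall u, `|u| <= 1 -> `|f u| <= 1.
  move=> u u1; rewrite -s1; apply: sup_upper_bound; first exact: ds_hassup.
  by exists u.
have [->|v0] := eqVneq v 0; first by rewrite linF0 // !normr0.
have nv : 0 < `|v| by rewrite normr_gt0.
have := le1 (`|v|^-1 *: v).
rewrite normrZ normfV normr_id mulVf ?gt_eqF // lexx linFZ // normrM normfV normr_id.
move=> /(_ isT); by rewrite ler_pdivrMl // mulr1.
Qed.

Lemma ds_adh f d : dual_sphere f -> 0 < d -> exists u, `|u| <= 1 /\ 1 - d < f u.
Proof.
move=> ds d0; have lf := ds_lin ds.
have s1 : sup [set `|f u| | u in (@closed_unit_ball R X)] = 1 by case: ds => _ [].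
have [_ [u u1 <-]] := sup_adherent d0 (ds_hassup ds).
rewrite s1 => h.
have [fu0|fu0] := leP 0 (f u).
  by exists u; split => //; rewrite -(ger0_norm fu0).
exists (- u); split; first by rewrite normrN.
by rewrite linFN // -(ltr0_norm fu0).
Qed.

Lemma normalize f y0 : linF f -> (forall v, `|f v| <= `|v|) -> f y0 != 0 ->
  exists N, [/\ 0 < N, N <= 1 & dual_sphere (fun v => f v / N)].
Proof.
move=> lf fb fy0.
pose S := [set `|f u| | u in (@closed_unit_ball R X)].
have S0 : S !=set0 by exists `|f 0|, 0 => //; rewrite /closed_unit_ball /= normr0.
have Sub : ubound S 1 by move=> _ [u u1 <-]; exact: le_trans (fb u) u1.
have hS : has_sup S by split => //; exists 1.
pose N := sup S.
have y00 : y0 != 0 by apply: contraNneq fy0 => ->; rewrite linF0.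
have ny : 0 < `|y0| by rewrite normr_gt0.
have N0 : 0 < N.
  apply: (@lt_le_trans _ _ `|f (`|y0|^-1 *: y0)|).
    by rewrite linFZ // normrM normfV normr_id mulr_gt0 ?invr_gt0 ?normr_gt0.
  apply: sup_upper_bound => //; exists (`|y0|^-1 *: y0) => //.
  by rewrite /closed_unit_ball /= normrZ normfV normr_id mulVf ?gt_eqF.
have N1 : N <= 1 by apply: ge_sup.
exists N; split => //; split; [|split].
- by move=> a u v; rewrite lf mulrDl mulrA.
- apply: (@lin_cont _ N^-1); first by move=> a u v; rewrite lf mulrDl mulrA.
    by rewrite invr_gt0.
  by move=> v; rewrite normrM normfV (gtr0_norm N0) mulrC ler_pM2l ?invr_gt0.
- pose S' := [set `|f u / N| | u in (@closed_unit_ball R X)].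
  have S'0 : S' !=set0 by exists `|f 0 / N|, 0 => //; rewrite /closed_unit_ball /= normr0.
  have fuN : forall u, (@closed_unit_ball R X) u -> `|f u| <= N.
    by move=> u u1; apply: sup_upper_bound => //; exists u.
  have S'ub : ubound S' 1.
    move=> _ [u u1 <-]; rewrite normrM normfV (gtr0_norm N0) ler_pdivrMr // mul1r.
    exact: fuN.
  apply/eqP; rewrite eq_le ge_sup //=.
  have hS' : has_sup S' by split => //; exists 1.
  have : N <= N * sup S'.
    apply: ge_sup => // _ [u u1 <-].
    have : `|f u / N| <= sup S' by apply: sup_upper_bound => //; exists u.
    by rewrite normrM normfV (gtr0_norm N0) ler_pdivrMr // mulrC.
  by rewrite -{1}(mulr1 N) ler_pM2l.
Qed.
End Norm.
Arguments linF {R X}.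
Arguments linF0 {R X f}.
Arguments linFN {R X f}.
Arguments linFZ {R X f}.
Arguments linFB {R X f}.
Arguments linFD {R X f}.
Arguments ds_lin {R X f}.
Arguments ds_hassup {R X f}.
Arguments ds_bound {R X f}.
Arguments ds_adh {R X f d}.
Arguments normalize {R X f y0}.
Section Aux.
Variables (R : realType) (X : normedModType R).

Lemma dense_near (D : set X) v d : dense D -> 0 < d -> exists w, D w /\ `|v - w| < d.
Proof.
move=> dD d0.
have [w [bw Dw]] := dD (ball v d) (ex_intro _ v (ballxx v d0)) (ball_open v d).
by exists w; split => //; move: bw; rewrite -ball_normE.
Qed.

Lemma closure_near (A : set X) z d : closure A z -> 0 < d -> exists c, A c /\ `|z - c| < d.
Proof.
move=> cl d0; have [c [Ac bc]] := cl _ (nbhsx_ballx z d d0).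
by exists c; split => //; move: bc; rewrite -ball_normE.
Qed.

Lemma not_closure (A : set X) z : ~ closure A z ->
  exists r, 0 < r /\ forall c, A c -> r <= `|c - z|.
Proof.
move=> nA; apply: contrapT => nex; apply: nA => B /nbhs_ballP[e e0 eB].
apply: contrapT => nAB; apply: nex; exists e; split => // c Ac.
rewrite leNgt; apply/negP => h; apply: nAB; exists c; split => //.
by apply: eB; rewrite -ball_normE /= distrC.
Qed.

Lemma rat_approx (t e : R) : 0 <= t -> 0 < e -> exists q : rat, 0 <= q /\ `|t - ratr q| < e.
Proof.
move=> t0 e0; have e2 : 0 < e / 2 by rewrite divr_gt0.
have [y [bq [q _ qy]]] := @dense_rat R (ball (t + e/2) (e/2))
  (ex_intro _ _ (ballxx _ e2)) (ball_open _ _).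
move: bq; rewrite -qy; rewrite -ball_normE /= ltr_norml => /andP[b1 b2].
have hq : t < ratr q by lra.
exists q; split; first by rewrite -(ler0q R) (le_trans t0) // ltW.
rewrite distrC ger0_norm; lra.
Qed.

Lemma linF_sum (f : X -> R) (I : Type) (s : seq I) (F : I -> X) :
  linF f -> f (\sum_(i <- s) F i) = \sum_(i <- s) f (F i).
Proof. by move=> lf; apply: (big_morph f (linFD lf) (linF0 lf)). Qed.

Lemma conv_max (f : X -> R) n (lam : 'I_n -> rat) (a : 'I_n -> X) : linF f ->
  (forall i, 0 <= lam i) -> \sum_(i < n) lam i = 1 ->
  exists i, f (\sum_(i < n) (ratr (lam i) : R) *: a i) <= f (a i).
Proof.
move=> lf l0 l1.
case: n lam a l0 l1 => [|n] lam a l0 l1; first by move: l1; rewrite big_ord0 => /eqP; rewrite eq_sym oner_eq0.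
case: (@arg_maxP _ _ _ ord0 xpredT (fun i => f (a i)) isT) => i _ Hi.
exists i; rewrite linF_sum //.
apply: (@le_trans _ _ (\sum_(j < n.+1) (ratr (lam j) : R) * f (a i))).
  apply: ler_sum => j _; rewrite linFZ //; apply: ler_wpM2l; first by rewrite ler0q.
  exact: Hi.
by rewrite -mulr_suml -rmorph_sum l1 rmorph1 mul1r.
Qed.

Lemma rat_conv_seq (A : set X) (s : seq (rat * X)) :
  (forall pr, pr \in s -> 0 <= pr.1 /\ A pr.2) -> \sum_(pr <- s) pr.1 = 1 ->
  rat_conv A (\sum_(pr <- s) (ratr pr.1 : R) *: pr.2).
Proof.
move=> gs s1.
have x0 : rat * X := (0, 0).
exists (size s), (fun i => (nth (0,0) s i).1), (fun i => (nth (0,0) s i).2).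
have mem : forall i : 'I_(size s), nth (0,0) s i \in s by move=> i; rewrite mem_nth.
split.
- by move=> i; have [] := gs _ (mem i).
- by move=> i; have [] := gs _ (mem i).
- by rewrite -s1 (big_nth (0,0)) big_mkord.
- by rewrite (big_nth (0,0)) big_mkord.
Qed.
End Aux.
Arguments dense_near {R X D} v {d}.
Arguments closure_near {R X A z d}.
Arguments not_closure {R X A z}.
Arguments rat_approx {R t e}.
Arguments linF_sum {R X f I s F}.
Arguments conv_max {R X f n lam a}.
Arguments rat_conv_seq {R X A s}.
Section Cone.
Variables (R : realType) (X : normedModType R) (A : set X) (z : X) (r : R).
Hypothesis r0 : 0 < r.
Hypothesis hA : forall c, rat_conv A c -> r <= `|c - z|.

Lemma K1 (s : seq (rat * X)) : (forall pr, pr \in s -> 0 <= pr.1 /\ A pr.2) ->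
  ratr (\sum_(pr <- s) pr.1) * r <= `|\sum_(pr <- s) (ratr pr.1 : R) *: (pr.2 - z)|.
Proof.
move=> gs; set Q := \sum_(pr <- s) pr.1.
have Q0 : 0 <= Q by rewrite /Q big_seq sumr_ge0 // => pr /gs [].
have [->|nQ] := eqVneq Q 0; first by rewrite rmorph0 mul0r.
have Qp : 0 < Q by rewrite lt_def nQ.
pose s' := [seq (pr.1 / Q, pr.2) | pr <- s].
have gs' : forall pr, pr \in s' -> 0 <= pr.1 /\ A pr.2.
  move=> _ /mapP[pr prs ->] /=; have [h1 h2] := gs _ prs; split => //.
  by rewrite divr_ge0.
have s'1 : \sum_(pr <- s') pr.1 = 1 by rewrite big_map -mulr_suml mulfV.
have := rat_conv_seq gs' s'1; set c := \sum_(pr <- s') _ => Ac.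
have -> : \sum_(pr <- s) (ratr pr.1 : R) *: (pr.2 - z) = (ratr Q : R) *: (c - z).
  rewrite scalerBr /c big_map scaler_sumr.
  under eq_bigr do rewrite scalerBr.
  rewrite sumrB; congr (_ - _).
    apply: eq_bigr => pr _ /=; rewrite scalerA -rmorphM mulrC divfK //.
  by rewrite -scaler_suml -rmorph_sum.
rewrite normrZ ger0_norm ?ler0q // ler_pM2l ?ltr0q //.
exact: hA.
Qed.

Lemma K2 (s : seq (R * X)) : (forall pr, pr \in s -> 0 <= pr.1 /\ A pr.2) ->
  forall d, 0 < d -> exists s' : seq (rat * X),
  [/\ (forall pr, pr \in s' -> 0 <= pr.1 /\ A pr.2),
      `|\sum_(pr <- s) pr.1 *: (pr.2 - z) - \sum_(pr <- s') (ratr pr.1 : R) *: (pr.2 - z)| <= d &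
      \sum_(pr <- s) pr.1 - d <= ratr (\sum_(pr <- s') pr.1)].
Proof.
elim: s => [|[t a] s IH] gs d d0.
  exists [::]; split => //; rewrite !big_nil ?rmorph0.
    by rewrite subrr normr0; exact: ltW.
  lra.
have [t0 Aa] := gs _ (mem_head _ _).
have gs1 : forall pr, pr \in s -> 0 <= pr.1 /\ A pr.2.
  by move=> pr prs; apply: gs; rewrite in_cons prs orbT.
have d2 : 0 < d / 2 by rewrite divr_gt0.
have [s' [g' h1 h2]] := IH gs1 _ d2.
pose k := `|a - z| + 1.
have k0 : 0 < k by rewrite /k ltr_wpDl.
have [q [q0 hq]] := rat_approx t0 (divr_gt0 d2 k0).
exists ((q, a) :: s'); split.
- by move=> pr; rewrite in_cons => /orP[/eqP -> //|]; exact: g'.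
- rewrite !big_cons /=.
  have -> : t *: (a - z) + \sum_(pr <- s) pr.1 *: (pr.2 - z) -
      ((ratr q : R) *: (a - z) + \sum_(pr <- s') (ratr pr.1 : R) *: (pr.2 - z)) =
      (t - ratr q) *: (a - z) + (\sum_(pr <- s) pr.1 *: (pr.2 - z) -
      \sum_(pr <- s') (ratr pr.1 : R) *: (pr.2 - z)) by rewrite scalerBl opprD addrACA.
  apply: (le_trans (ler_normD _ _)); rewrite normrZ.
  have hk : `|t - ratr q| * k < d / 2 by rewrite -ltr_pdivlMr.
  have : 0 <= `|t - ratr q| * `|a - z| by rewrite mulr_ge0.
  have := normr_ge0 (t - ratr q).
  move: hk h1; rewrite /k mulrDr mulr1; lra.
- rewrite !big_cons /= rmorphD /=.
  have hk : `|t - ratr q| * k < d / 2 by rewrite -ltr_pdivlMr.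
  have : 0 <= `|t - ratr q| * `|a - z| by rewrite mulr_ge0.
  have := ler_norm (t - ratr q).
  move: hk h2; rewrite /k mulrDr mulr1; lra.
Qed.

Lemma lift_good (s : seq (R * X)) : goodS [set a - z | a in A] s ->
  exists s1 : seq (R * X), [/\ (forall pr, pr \in s1 -> 0 <= pr.1 /\ A pr.2),
    sumT s1 = sumT s & \sum_(pr <- s1) pr.1 *: (pr.2 - z) = sumV s].
Proof.
elim: s => [|[t y] s IH] gs; first by exists [::]; split => //; rewrite /sumV !big_nil.
have [t0 [a Aa ay]] := gs _ (mem_head _ _).
have [s1 [g1 e1 e2]] : exists s1 : seq (R * X), [/\ (forall pr, pr \in s1 -> 0 <= pr.1 /\ A pr.2),
    sumT s1 = sumT s & \sum_(pr <- s1) pr.1 *: (pr.2 - z) = sumV s].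
  by apply: IH => pr prs; apply: gs; rewrite in_cons prs orbT.
exists ((t, a) :: s1); split.
- by move=> pr; rewrite in_cons => /orP[/eqP -> //|]; exact: g1.
- by rewrite /sumT !big_cons -/(sumT _) e1.
- by rewrite /sumV !big_cons /= e2 ay.
Qed.

Lemma cone_ok s : goodS [set a - z | a in A] s -> sumT s * r <= `|sumV s|.
Proof.
move=> gs; have [s1 [g1 e1 e2]] := lift_good s gs.
rewrite -e1 -e2; apply/ler_addgt0Pr => e e0.
have r1 : 0 < r + 1 by rewrite addr_gt0.
pose d := e / (r + 1).
have d0 : 0 < d by rewrite divr_gt0.
have de : d * (r + 1) = e by rewrite divfK ?gt_eqF.
have [s' [g' h1 h2]] := K2 s1 g1 _ d0.
have := K1 s' g'.
have := lerB_dist (\sum_(pr <- s') (ratr pr.1 : R) *: (pr.2 - z))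
                  (\sum_(pr <- s1) pr.1 *: (pr.2 - z)).
rewrite distrC.
have : (sumT s1 - d) * r <= ratr (\sum_(pr <- s') pr.1) * r by rewrite ler_wpM2r // ltW.
rewrite /sumT in h2 *.
move: de h1; lra.
Qed.
End Cone.
Lemma forward (R : realType) (X : normedModType R) (D : set X) :
  dense D -> daugavet X ->
   forall (eps : R), 0 < eps ->
   forall x z : X, D x -> D z ->
     `|z| >= `|x| \/
     closed_rat_conv
       (scale_set `|x| (@open_unit_ball R X) `&` D `&` [set y | `|x - y| > 2 * `|x| - eps]) z.
Proof.
move=> dD dg eps e0 x z Dx Dz.
have [h|h] := leP `|x| `|z|; [by left | right].
set Aset := (_ `&` _ `&` _).
apply: contrapT => ncl.
have [r [r0 hr]] := @not_closure R X (rat_conv Aset) z ncl.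
set M := `|x|.
have M0 : 0 < M by apply: le_lt_trans h.
have x0 : x != 0 by rewrite -normr_gt0.
have [g [dsg gA]] : exists g : X -> R, dual_sphere g /\ forall a, Aset a -> g a <= g z - r.
  have [[a0 Aa0]|nA] := pselect (Aset !=set0).
  - have [f [lf fb fY]] := @sep_core R X [set a - z | a in Aset] r (@cone_ok R X Aset z r r0 hr).
    have fy0 : f (a0 - z) != 0.
      by apply: ltr0_neq0; apply: (le_lt_trans (fY _ (ex_intro2 _ _ a0 Aa0 erefl))); rewrite oppr_lt0.
    have [N [N0 N1 dsN]] := normalize lf fb fy0.
    exists (fun v => f v / N); split => // a Aa.
    have := fY (a - z) (ex_intro2 _ _ a Aa erefl); rewrite (linFB lf) => ha.
    have h1 : (f a - f z) / N <= - r / N by rewrite ler_pM2r ?invr_gt0.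
    have h2 : r <= r / N by rewrite ler_pdivlMr // ler_piMr // ltW.
    move: h1; rewrite mulrBl mulNr; lra.
  - have cx : forall s, goodS [set x] s -> sumT s * M <= `|sumV s|.
      move=> s gs.
      have -> : sumV s = sumT s *: x.
        rewrite /sumV /sumT scaler_suml big_seq [in RHS]big_seq.
        by apply: eq_bigr => pr prs; rewrite (gs pr prs).2.
      rewrite normrZ ger0_norm // /sumT big_seq.
      by apply: sumr_ge0 => pr /gs [].
    have [f [lf fb fY]] := @sep_core R X [set x] M cx.
    have fy0 : f x != 0.
      by apply: ltr0_neq0; apply: (le_lt_trans (fY x erefl)); rewrite oppr_lt0.
    have [N [N0 N1 dsN]] := normalize lf fb fy0.
    exists (fun v => f v / N); split => // a Aa.
    by exfalso; apply: nA; exists a.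
have lg := ds_lin dsg; have gb := ds_bound dsg.
have gzM : g z < M by apply: le_lt_trans (ler_norm _) _; apply: le_lt_trans (gb z) h.
have x1n : `|M^-1 *: x| = 1 by rewrite normrZ normfV normr_id mulVf ?gt_eqF.
have al0 : 0 < 1 - (g z - r / 2) / M.
  by rewrite subr_gt0 ltr_pdivrMr // mul1r; lra.
have e'0 : 0 < eps / (4 * M) by rewrite divr_gt0 ?mulr_gt0.
have [y [yB gy dy]] := dg _ e'0 _ x1n g dsg _ al0.
have gy' : g z - r / 2 < M * g y.
  have : (g z - r / 2) / M < g y by lra.
  by rewrite ltr_pdivrMr // [g y * M]mulrC.
have dy' : 2 * M - eps / 4 < `|x - M *: y|.
  have -> : x - M *: y = M *: (M^-1 *: x - y) by rewrite scalerBr scalerA mulfV ?gt_eqF // scale1r.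
  rewrite normrZ gtr0_norm //.
  have : M * (2 - eps / (4 * M)) < M * `|M^-1 *: x - y| by rewrite ltr_pM2l.
  have -> : M * (2 - eps / (4 * M)) = 2 * M - eps / 4.
    by field; rewrite gt_eqF.
  by [].
set m := Num.min (Num.min r eps) M.
have m0 : 0 < m by rewrite /m !lt_min r0 e0 M0.
have mr : m <= r by rewrite /m !ge_min lexx.
have me : m <= eps by rewrite /m !ge_min lexx orbT.
have mM : m <= M by rewrite /m ge_min lexx orbT.
set dd := m / 4.
have dpos : 0 < dd by rewrite /dd divr_gt0.
have ddr : dd <= r / 4 by rewrite /dd; lra.
have dde : dd <= eps / 4 by rewrite /dd; lra.
have ddM : dd <= M / 4 by rewrite /dd; lra.
have y1 : `|y| <= 1 by [].
set w' := (M - dd) *: y.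
have Md : 0 <= M - dd by lra.
have nw' : `|w'| <= M - dd.
  by rewrite /w' normrZ ger0_norm // -[leRHS]mulr1 ler_wpM2l.
have gw' : M * g y - dd <= g w'.
  rewrite /w' (linFZ lg) mulrBl.
  have : dd * g y <= dd * 1.
    by rewrite ler_wpM2l ?(le_trans (ler_norm _) (le_trans (gb y) y1)) // ltW.
  lra.
have dw' : `|x - M *: y| - dd <= `|x - w'|.
  have -> : x - w' = (x - M *: y) + dd *: y by rewrite /w' scalerBl opprD opprK addrA.
  have := lerB_normD (x - M *: y) (dd *: y); rewrite normrZ ger0_norm ?(ltW dpos) //.
  have : dd * `|y| <= dd by rewrite -[leRHS]mulr1 ler_wpM2l // ltW.
  lra.
have dd0 : 0 < dd / 2 by rewrite divr_gt0.
have [w [Dw hw]] := dense_near w' dD dd0.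
have nw : `|w| < M.
  have := ler_distD w' w 0; rewrite !subr0 distrC; lra.
have Aw : Aset w.
  split; [split|] => //.
    exists (M^-1 *: w); last by rewrite scalerA mulfV ?gt_eqF // scale1r.
    rewrite /open_unit_ball /= normrZ normfV normr_id ltr_pdivrMl // mulr1 //.
  rewrite /=; have := ler_distD w x w'; rewrite [`|w - w'|]distrC -/M; lra.
have := gA w Aw.
have : g w' - dd / 2 <= g w.
  have := gb (w' - w); rewrite (linFB lg) => hb.
  have := ler_norm (g w' - g w); lra.
lra.
Qed.
Lemma minle (R : realType) (p q : R) : Num.min p q <= p /\ Num.min p q <= q.
Proof. by rewrite !ge_min !lexx orbT. Qed.

Lemma backward (R : realType) (X : normedModType R) (D : set X) :
  dense D ->
  (forall (eps : R), 0 < eps ->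
   forall x z : X, D x -> D z ->
     `|z| >= `|x| \/
     closed_rat_conv
       (scale_set `|x| (@open_unit_ball R X) `&` D `&` [set y | `|x - y| > 2 * `|x| - eps]) z) ->
  daugavet X.
Proof.
move=> dD H eps e0 x nx f ds alpha al0.
have lf := ds_lin ds; have fb := ds_bound ds.
set a' := Num.min alpha 1.
have a'0 : 0 < a' by rewrite /a' lt_min al0 ltr01.
have a'1 : a' <= 1 by exact: (minle _ _ _).2.
have a'a : a' <= alpha by exact: (minle _ _ _).1.
set m := Num.min (Num.min a' eps) 1.
have m0 : 0 < m by rewrite /m !lt_min al0 e0 ltr01.
have ma : m <= a' by apply: le_trans (minle _ _ _).1 (minle _ _ _).1.
have me : m <= eps by apply: le_trans (minle _ _ _).1 (minle _ _ _).2.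
have m1 : m <= 1 by exact: (minle _ _ _).2.
set d := m / 16.
have d0 : 0 < d by rewrite /d divr_gt0.
have da : d <= a' / 16 by rewrite /d; lra.
have de : d <= eps / 16 by rewrite /d; lra.
have d1 : d <= 1 / 16 by rewrite /d; lra.
have a4 : 0 < a' / 4 by rewrite divr_gt0.
have [u [u1 fu]] := ds_adh ds a4.
have [x' [Dx' hx']] := dense_near x dD d0.
set w0 := (1 - a' / 4) *: u.
have [z' [Dz' hz']] := dense_near w0 dD d0.
set mx := `|x'|.
have lo : 1 - d < mx by have := lerB_dist x x'; rewrite nx -/mx; lra.
have hi : mx < 1 + d by have := lerB_dist x' x; rewrite nx -/mx distrC; lra.
have c0 : 0 <= 1 - a' / 4 by lra.
have nw0 : `|w0| <= 1 - a' / 4.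
  by rewrite /w0 normrZ ger0_norm // -[leRHS]mulr1 ler_wpM2l.
have nz' : `|z'| < 1 - a' / 4 + d by have := lerB_dist z' w0; rewrite distrC; lra.
have fz' : (1 - a' / 4) * f u - d < f z'.
  have := fb (w0 - z'); rewrite (linFB lf) /w0 (linFZ lf) => hb.
  have := ler_norm ((1 - a' / 4) * f u - f z'); lra.
have e4 : 0 < eps / 4 by rewrite divr_gt0.
case: (H (eps / 4) e4 x' z' Dx' Dz') => [hle|cl].
  by exfalso; move: hle; rewrite -/mx; lra.
have [c [Ac hc]] := closure_near cl d0.
have fc : f z' - d < f c.
  have := fb (z' - c); rewrite (linFB lf) => hb.
  have := ler_norm (f z' - f c); lra.
case: Ac => n [lam [a [Aa l0 l1 ec]]].
have [i hi'] := @conv_max R X f n lam a lf l0 l1.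
rewrite -ec in hi'.
case: (Aa i) => -[[v vb eav] Dai] far.
move: vb; rewrite /open_unit_ball /= => vb.
move: far; rewrite /= -/mx => far.
have fai : f (a i) = mx * f v by rewrite -eav (linFZ lf).
have pu : (1 - a' / 4) * (1 - a' / 4) <= (1 - a' / 4) * f u by rewrite ler_wpM2l // ltW.
have sq : 0 <= a' * a' by rewrite mulr_ge0 // ltW.
have fa_lo : 1 - a' / 2 - 2 * d < f (a i) by lra.
have mx0 : 0 < mx by lra.
exists v; split.
- by rewrite /closed_unit_ball /= ltW.
- rewrite ltNge; apply/negP => hv.
  have [fv0|fv0] := leP 0 (f v).
    have h1 : mx * f v <= (1 + d) * f v by rewrite ler_wpM2r // ltW.
    have h2 : (1 + d) * f v <= (1 + d) * (1 - a') by rewrite ler_wpM2l; lra.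
    have h3 : 0 <= d * a' by rewrite mulr_ge0 // ltW.
    lra.
  have : mx * f v < 0 by rewrite pmulr_rlt0.
  lra.
- rewrite ltNge; apply/negP => hv.
  have hmx : `|mx *: x - x'| < 2 * d.
    have -> : mx *: x - x' = (mx - 1) *: x + (x - x') by rewrite scalerBl scale1r addrA subrK.
    apply: (le_lt_trans (ler_normD _ _)); rewrite normrZ nx mulr1.
    have : `|mx - 1| < d by rewrite ltr_norml; apply/andP; split; lra.
    lra.
  have eq : mx *: (x - v) = (x' - a i) + (mx *: x - x').
    by rewrite -eav scalerBr [RHS]addrC addrA subrK.
  have := lerB_normD (x' - a i) (mx *: x - x'); rewrite -eq normrZ gtr0_norm // => hh.
  have h1 : mx * `|x - v| <= mx * (2 - eps) by rewrite ler_wpM2l // ltW.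
  have h2 : (1 - d) * eps <= mx * eps by rewrite ler_wpM2r // ltW.
  have h3 : d * eps <= 1 / 16 * eps by rewrite ler_wpM2r // ltW.
  lra.
Qed.
Theorem lemma5p7 (R : realType) (X : completeNormedModType R) (D : set X) :
  dense D ->
  (daugavet X <->
   forall (eps : R), 0 < eps ->
   forall x z : X, D x -> D z ->
     `|z| >= `|x| \/
     closed_rat_conv
       (scale_set `|x| (@open_unit_ball R X) `&` D `&` [set y | `|x - y| > 2 * `|x| - eps]) z).
Proof.
move=> dD; split.
- exact: forward.
- exact: backward.
Qed.
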